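(* Let $n \geq 1$ and let $D_n'$ be the digraph defined in the context. For any $u, v, w \in V(D_n')$, it is not the case that all of $uv$, $vw$, $uw$ are edges of $D_n'$. (That is, $D_n'$ contains no transitive tournament on three vertices.)
   Context: Digraphs $D_n$ are defined recursively. $D_1$ is a single vertex with no edges. For $n \geq 2$, take $n-1$ disjoint copies $D_{n-1}^1,\dots,D_{n-1}^{n-1}$ of $D_{n-1}$; let $\mathcal{T}$ be the set of all sequences $T=(x_1,\dots,x_{n-1})$ with $x_i \in V(D_{n-1}^i)$ for each $i$. For each $T \in \mathcal{T}$ add a new vertex $v_T$ and, for each $i \in \{1,\dots,n-1\}$, an edge from $x_i$ to $v_T$. The resulting digraph is $D_n$. It is a known fact that $D_n$ is acyclic and that for any two vertices $u,v$ of $D_n$ there is at most one directed path from $u$ to $v$ in $D_n$. The length of a path is its number of edges. The digraph $D_n'$ has $V(D_n')=V(D_n)$ and, for every ordered pair $(u,v)$ of vertices such that there is a directed path in $D_n$ from $u$ to $v$: if that path has length $\equiv 1 \pmod 3$, $D_n'$ has the edge $uv$, called positive; if that path has length $\equiv 2 \pmod 3$, $D_n'$ has the edge $vu$, called negative. $D_n'$ has no other edges. *)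

(* Defs.v *)
From mathcomp Require Import all_boot.
Set Implicit Arguments. Unset Strict Implicit. Unset Printing Implicit Defensive.

(* Vtx k = vertex set of D_(k+1).
   D_(k+2) : k+1 disjoint copies of D_(k+1), a vertex of copy i being (i, a)
   (copies indexed by 'I_(k+1), i.e. 0..k instead of 1..k+1), plus one new
   vertex v_T for every T : 'I_(k+1) -> Vtx k choosing x_i in copy i. *)
Fixpoint Vtx (k : nat) : Type :=
  match k with
  | 0 => unit
  | k'.+1 => (('I_k'.+1 * Vtx k') + ('I_k'.+1 -> Vtx k'))%type
  end.

Fixpoint Edge (k : nat) : Vtx k -> Vtx k -> Prop :=
  match k return Vtx k -> Vtx k -> Prop with
  | 0 => fun _ _ => False
  | k'.+1 => fun x y =>
      match x, y with
      | inl (i, a), inl (j, b) => i = j /\ Edge a b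
      | inl (i, a), inr T => T i = a                  (* edge x_i -> v_T *)
      | _, _ => False
      end
  end.

Definition DV (n : nat) : Type := Vtx n.-1.
Definition DE (n : nat) : DV n -> DV n -> Prop := @Edge n.-1.

(* DPath n u v l : there is a directed path (walk; D_n is acyclic so these
   coincide) of length l from u to v in D_n. *)
Inductive DPath (n : nat) : DV n -> DV n -> nat -> Prop :=
  | DPath0 (x : DV n) : DPath x x 0
  | DPathS (x y z : DV n) (l : nat) : DE x y -> DPath y z l -> DPath x z l.+1.

Definition DE' (n : nat) (u v : DV n) : Prop :=
  (exists l, DPath u v l /\ l %% 3 = 1)
  \/ (exists l, DPath v u l /\ l %% 3 = 2).

(* Main.v *)
From Stdlib Require Import Lia.
Require Import Defs.
From mathcomp Require Import all_boot.
From mathcomp Require Import zify.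
Set Implicit Arguments. Unset Strict Implicit.

Inductive RP {T : Type} (R : T -> T -> Prop) : T -> T -> nat -> Prop :=
  | RP0 x : RP R x x 0
  | RPS x y z l : R x y -> RP R y z l -> RP R x z l.+1.

Lemma RP_cat {T} (R : T -> T -> Prop) x y z l1 l2 :
  RP R x y l1 -> RP R y z l2 -> RP R x z (l1 + l2).
Proof.
elim=> [//|a b c l Hab _ IH] H; rewrite addSn; exact: RPS Hab (IH H).
Qed.

Lemma DPath_RP n (x y : DV n) l : DPath x y l -> RP (@Edge n.-1) x y l.
Proof. elim=> [z|a b c m H _ IH]; [exact: RP0 | exact: RPS H IH]. Qed.

Lemma RP_inr k (T : 'I_k.+1 -> Vtx k) (z : Vtx k.+1) l :
  RP (@Edge k.+1) (inr T) z l -> z = inr T /\ l = 0.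
Proof.
move=> H; remember (inr T : Vtx k.+1) as x eqn:Ex.
case: H Ex => [//|a b c m Hab _ Ea]; subst a; by case: b Hab => [[]|].
Qed.

Lemma RP_inl_gen k (x z : Vtx k.+1) l :
  RP (@Edge k.+1) x z l -> forall i a, x = inl (i, a) ->
  (exists b, z = inl (i, b) /\ RP (@Edge k) a b l) \/
  (exists T m, z = inr T /\ l = m.+1 /\ RP (@Edge k) a (T i) m).
Proof.
elim=> [x0 i0 a0 ->|x0 y z' m Hxy Hyz IH i0 a0 Ex].
  by left; exists a0; split=> //; exact: RP0.
subst x0; case: y Hxy Hyz IH => [[j b]|T] /= Hxy Hyz IH.
  case: Hxy => Eij Hab; subst j.
  case: (IH i0 b erefl) => [[c [-> Hc]]|[T [m' [-> [-> Hm]]]]].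
    by left; exists c; split=> //; exact: RPS Hab Hc.
  by right; exists T, m'.+1; split=> //; split=> //; exact: RPS Hab Hm.
have [-> ->] := RP_inr Hyz.
by right; exists T, 0; split=> //; split=> //; rewrite Hxy; exact: RP0.
Qed.

Lemma RP_inl k (i : 'I_k.+1) (a : Vtx k) (z : Vtx k.+1) l :
  RP (@Edge k.+1) (inl (i, a)) z l ->
  (exists b, z = inl (i, b) /\ RP (@Edge k) a b l) \/
  (exists T m, z = inr T /\ l = m.+1 /\ RP (@Edge k) a (T i) m).
Proof. by move=> H; apply: (RP_inl_gen H). Qed.

Lemma RP_uniq k (x y : Vtx k) l1 l2 :
  RP (@Edge k) x y l1 -> RP (@Edge k) x y l2 -> l1 = l2.
Proof.
elim: k x y l1 l2 => [|k IH] x y l1 l2.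
  by case=> [?|? ? ? ? []]; case=> [?|? ? ? ? []].
case: x => [[i a]|T] H1 H2.
  case: (RP_inl H1) => [[b [Eb Hb]]|[T [m [ET [El Hm]]]]];
  case: (RP_inl H2) => [[b' [Eb' Hb']]|[T' [m' [ET' [El' Hm']]]]]; subst.
  - case: Eb' => E; subst; exact: IH Hb Hb'.
  - by [].
  - by [].
  - case: ET' => E; subst; by rewrite (IH _ _ _ _ Hm Hm').
have [_ ->] := RP_inr H1; by have [_ ->] := RP_inr H2.
Qed.

Theorem lemma2p3 (n : nat) (hn : 1 <= n) (u v w : DV n) :
  ~ (DE' u v /\ DE' v w /\ DE' u w).
Proof.
move=> [[[a [Ha ma]]|[a [Ha ma]]] [[[b [Hb mb]]|[b [Hb mb]]] [[c [Hc mc]]|[c [Hc mc]]]]];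
move/DPath_RP: Ha => Ha; move/DPath_RP: Hb => Hb; move/DPath_RP: Hc => Hc.
- have := RP_uniq (RP_cat Ha Hb) Hc; lia.
- have := RP_uniq (RP_cat (RP_cat Ha Hb) Hc) (RP0 _ _); lia.
- have := RP_uniq (RP_cat Hc Hb) Ha; lia.
- have := RP_uniq (RP_cat Hc Ha) Hb; lia.
- have := RP_uniq (RP_cat Ha Hc) Hb; lia.
- have := RP_uniq (RP_cat Hb Hc) Ha; lia.
- have := RP_uniq (RP_cat (RP_cat Hc Hb) Ha) (RP0 _ _); lia.
- have := RP_uniq (RP_cat Hb Ha) Hc; lia.
Qed.
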